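(* Let $N\in\mathbb{N}$ be odd and either prime or divisible by at least two distinct primes. Let $b\in\mathbb{Z}$ and $f\in\mathbb{Z}[X]$ with $f(b)=N$, let $d:=\deg f$, and suppose $d$ is smaller than $q:=\max\{q'\text{ prime}:q'\mid N\}$ and $\gcd(\mathrm{lc}(f),N)=1$, where $\mathrm{lc}(f)$ is the leading coefficient of $f$. Then \[N\text{ is prime}\iff \forall x\in\{0,\dots,N-1\}:\ f(x)^{(N-1)/2}\bmod N\in\{-1,0,1\}\] (where $-1$ denotes the residue $N-1$). *)

(* Defs.v *)
From mathcomp Require Import all_boot all_order all_algebra.
Set Implicit Arguments. Unset Strict Implicit. Unset Printing Implicit Defensive.

(* Main.v *)
Require Import Defs.
From mathcomp Require Import all_boot all_order all_algebra all_field.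
Import Order.TTheory GRing.Theory Num.Theory.
Local Open Scope ring_scope.

Lemma Fp_intr_eq0 {p} (pp : prime p) (z : int) :
  ((z%:~R : 'F_p) == 0) = (p%:Z %| z)%Z.
Proof.
rewrite dvdzE /= (dvdn_pcharf (pchar_Fp pp)).
case: z => n; first by rewrite pmulrn.
by rewrite NegzE mulrNz oppr_eq0 abszN /= pmulrn.
Qed.

Lemma Fp_intr_mod {p} (pp : prime p) (N : nat) (z : int) : (p %| N)%N ->
  (((z %% N%:Z)%Z)%:~R : 'F_p) = z%:~R.
Proof.
move=> pN; have e : (z %% N%:Z)%Z = z + (- (z %/ N%:Z)%Z) * N%:Z.
  by rewrite [in RHS](divz_eq z N) mulNr addrCA addrN addr0.
rewrite e intrD intrM.
have -> : ((N%:Z)%:~R : 'F_p) = 0.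
  by apply/eqP; rewrite (Fp_intr_eq0 pp) dvdzE.
by rewrite GRing.mulr0 addr0.
Qed.

Lemma Fp_horner p (f : {poly int}) (z : int) :
  (map_poly (fun a : int => (a%:~R : 'F_p)) f).[z%:~R] = (f.[z])%:~R.
Proof. exact: horner_map. Qed.

Lemma Fp_natz p (n : nat) : ((n%:Z)%:~R : 'F_p) = n%:R.
Proof. by rewrite pmulrn. Qed.

Lemma Fp_small_val {N} (pN : prime N) (r : int) (c : nat) :
  0 <= r -> r < N%:Z -> (c < N)%N -> (r%:~R : 'F_N) = c%:R -> r = c%:Z.
Proof.
case: r => // m _; rewrite ltz_nat => mN cN; rewrite -pmulrn.
by move/(congr1 (@nat_of_ord _)); rewrite !val_Fp_nat // !modn_small // => ->.
Qed.

Theorem corollary5p2 (N : nat) (b : int) (f : {poly int}) :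
  odd N ->
  (prime N \/ (2 <= size (primes N))%N) ->
  f.[b] = N%:Z ->
  ((size f).-1 < max_pdiv N)%N ->
  coprimez (lead_coef f) N%:Z ->
  (prime N <->
   (forall x : nat, (x < N)%N ->
      let r := ((f.[x%:Z] ^+ ((N - 1) %/ 2)%N) %% N%:Z)%Z in
      r = 0 \/ r = 1 \/ r = (N - 1)%N%:Z)).
Proof.
move=> oddN hN fb hdeg hlc.
have N_gt1 : (1 < N)%N.
  case: hN => [/prime_gt1 //|]; case: (N) => [|[|n]] //.
have eN : N = (N./2).*2.+1 by rewrite -[LHS]odd_double_half oddN.
set k := ((N - 1) %/ 2)%N.
have hkv : k = N./2.
  by rewrite /k [in LHS]eN subn1 /= -muln2 mulnK.
have hk2 : (k * 2 = N - 1)%N by rewrite hkv [in RHS]eN subn1 /= muln2.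
have hk1 : (0 < k)%N.
  rewrite hkv; move: N_gt1; rewrite [in X in X -> _]eN; case: (N./2) => //.
have N0 : (N%:Z != 0) by rewrite eqz_nat; case: (N) N_gt1.
split.
- move=> pN x xN /=.
  set z := f.[x%:Z].
  have r0 : 0 <= ((z ^+ k) %% N%:Z)%Z by apply: modz_ge0.
  have r1 : ((z ^+ k) %% N%:Z)%Z < N%:Z by rewrite (ltz_pmod _ ) // ltz_nat; case: (N) N_gt1.
  have hr : ((((z ^+ k) %% N%:Z)%Z)%:~R : 'F_N) = (z%:~R : 'F_N) ^+ k.
    by rewrite (Fp_intr_mod pN) ?dvdnn // rmorphXn.
  have [y0|yn0] := eqVneq (z%:~R : 'F_N) 0.
    left; apply: (@Fp_small_val N pN _ 0%N r0 r1) => //; first by case: (N) N_gt1.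
    by rewrite hr y0 expr0n; case: (k) hk1.
  have ferm : (z%:~R : 'F_N) ^+ (N - 1) = 1.
    apply: (mulIf yn0); rewrite mul1r -exprSr subn1 prednK; last by case: (N) N_gt1.
    by have := expf_card (z%:~R : 'F_N); rewrite card_Fp.
  have : ((z%:~R : 'F_N) ^+ k) ^+ 2 == 1 by rewrite -exprM hk2 ferm.
  rewrite sqrf_eq1 => /orP[] /eqP hy; rewrite hy in hr.
    right; left; apply: (@Fp_small_val N pN _ 1%N r0 r1); by [rewrite hr | case: (N) N_gt1].
  right; right; apply: (@Fp_small_val N pN _ (N-1)%N r0 r1) => //; first by rewrite subn1 ltn_predL; case: (N) N_gt1.
  rewrite hr natrB; last by case: (N) N_gt1.
  by rewrite pchar_Fp_0 // sub0r.
- move=> H; case: hN => // h2; exfalso.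
  have pq : prime (max_pdiv N) := max_pdiv_prime N_gt1.
  have qN : (max_pdiv N %| N)%N := max_pdiv_dvd N.
  set q := max_pdiv N in pq qN hdeg.
  have [p [pp pN pneq]] : exists p, [/\ prime p, (p %| N)%N & p != q].
    have Ua := primes_uniq N.
    have : forall a, a \in primes N -> prime a /\ (a %| N)%N.
      by move=> a; rewrite mem_primes => /and3P[? _ ?].
    move: Ua h2; case: (primes N) => [|a [|c s]] // Ua _ hm.
    have [ha1 ha2] := hm a (mem_head _ _).
    have hc : c \in [:: a, c & s] by rewrite !inE eqxx orbT.
    have [hc1 hc2] := hm c hc.
    move: Ua => /andP[]; rewrite inE negb_or => /andP[ac _] _.
    case: (eqVneq a q) => [aq|aq].
      by exists c; split => //; rewrite -aq eq_sym.
    by exists a.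
  set fq := map_poly (fun a : int => (a%:~R : 'F_q)) f.
  have lcq : ((lead_coef f)%:~R : 'F_q) != 0.
    rewrite (Fp_intr_eq0 pq); apply/negP => qlc.
    move: hlc; rewrite coprimezE /= => hlc.
    have := coprime_dvdl qlc hlc.
    by rewrite prime_coprime // qN.
  have sizeq : size fq = size f by apply: size_map_poly_id0.
  have fq0 : fq != 0.
    rewrite -size_poly_eq0 sizeq size_poly_eq0; apply: contraNneq lcq => ->.
    by rewrite lead_coef0 mulr0z.
  have [r0 hr0] : exists r0 : 'F_q, ~~ root fq r0.
    case: (boolP [exists r0, ~~ root fq r0]) => [/existsP //|].
    rewrite negb_exists => /forallP allr.
    have := max_poly_roots fq0 (rs := enum 'F_q) _ (enum_uniq _).
    rewrite -cardE card_Fp // sizeq.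
    have -> : all (root fq) (enum 'F_q).
      by apply/allP => r _; have := allr r; rewrite negbK.
    move=> /(_ isT) hq; move: hdeg; case: (size f) hq => // n; rewrite ltnS /=.
    by move=> u1 u2; move: (leq_ltn_trans u1 u2); rewrite ltnn.
  have cop : coprime p q by rewrite prime_coprime // dvdn_prime2.
  set c := nat_of_ord r0.
  have cq : (c < q)%N by rewrite /c -[X in (_ < X)%N](Fp_cast pq) ltn_ord.
  have r0c : r0 = c%:R.
    by apply: val_inj; rewrite /= val_Fp_nat // modn_small.
  set bq := `|(b %% p%:Z)%Z|%N.
  set x := (chinese p q bq c %% (p * q))%N.
  have p0 : (0 < p)%N by apply: prime_gt0.
  have q0 : (0 < q)%N by apply: prime_gt0.
  have xN : (x < N)%N.
    apply: (leq_trans (ltn_pmod _ _)); first by rewrite muln_gt0 p0.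
    apply: dvdn_leq; first by case: (N) N_gt1.
    by rewrite Gauss_dvd // pN qN.
  have Np : (N%:R : 'F_p) = 0.
    by apply/eqP; rewrite -(dvdn_pcharf (pchar_Fp pp)).
  have hxp : (x%:R : 'F_p) = (b%:~R : 'F_p).
    rewrite -(Fp_nat_mod pp) /x (modn_dvdm _ (dvdn_mulr q (dvdnn p))) chinese_modl //.
    rewrite (Fp_nat_mod pp) -Fp_natz /bq abszE ger0_norm; last first.
      by apply: modz_ge0; rewrite eqz_nat -lt0n.
    by rewrite (Fp_intr_mod pp) ?dvdnn.
  have hxq : (x%:R : 'F_q) = r0.
    rewrite -(Fp_nat_mod pq) /x (modn_dvdm _ (dvdn_mull p (dvdnn q))) chinese_modr //.
    by rewrite (Fp_nat_mod pq) r0c.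
  have ffp : ((f.[x%:Z])%:~R : 'F_p) = 0.
    by rewrite -Fp_horner Fp_natz hxp Fp_horner fb Fp_natz.
  have ffq : ((f.[x%:Z])%:~R : 'F_q) != 0.
    by rewrite -Fp_horner Fp_natz hxq.
  have := H x xN; rewrite /=.
  set rr := ((f.[x%:Z] ^+ k) %% N%:Z)%Z.
  have hp : (rr%:~R : 'F_p) = 0.
    by rewrite /rr (@Fp_intr_mod p pp N _ pN) rmorphXn /= ffp expr0n; case: (k) hk1.
  have hq : (rr%:~R : 'F_q) != 0.
    by rewrite /rr (@Fp_intr_mod q pq N _ qN) rmorphXn /= expf_neq0.
  case=> [e|[e|e]].
  + by move: hq; rewrite e mulr0z eqxx.
  + by move: hp; rewrite e mulr1z => /eqP; rewrite oner_eq0.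
  + move: hp; rewrite e Fp_natz natrB; last by case: (N) N_gt1.
    by rewrite Np sub0r => /eqP; rewrite oppr_eq0 oner_eq0.
Qed.
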